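(* For every starting point $\mathbf{x}^{(0)}\in\Delta_n$, the trajectory $\mathbf{x}^{(t)}=g^t(\mathbf{x}^{(0)})$ converges as $t\to\infty$, and its limit is a fixed point of $g$.
   Context: $G=(V,E)$ is a finite undirected graph with $n$ vertices, $N_u$ the neighbourhood of $u$, $\Delta_n=\{\mathbf{x}\in\mathbb{R}^n_{\ge 0}:\sum_v\mathbf{x}_v=1\}$. For every edge $uv\in E$, $F_{uv}=F_{vu}:[-1,1]\to[-1,1]$ is continuously differentiable, $F_{uv}(0)=0$, increasing and odd. The map $g:\Delta_n\to\Delta_n$ is $g(\mathbf{x})_u=\mathbf{x}_u+\sum_{v\in N_u}\mathbf{x}_u\mathbf{x}_vF_{uv}(\mathbf{x}_u-\mathbf{x}_v)$; a fixed point is $\mathbf{p}$ with $g(\mathbf{p})=\mathbf{p}$. *)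

(* Defs.v *)
From HB Require Import structures.
From mathcomp Require Import all_boot all_order all_algebra.
From mathcomp Require Import all_classical all_reals all_analysis.
Set Implicit Arguments. Unset Strict Implicit. Unset Printing Implicit Defensive.
Import Order.TTheory GRing.Theory Num.Theory.
Import numFieldNormedType.Exports.
Local Open Scope ring_scope.
Local Open Scope classical_set_scope.

Definition in_simplex (R : realType) (n : nat) (x : 'rV[R]_n) : Prop :=
  (forall u : 'I_n, 0 <= x ord0 u) /\ \sum_(u < n) x ord0 u = 1.

Definition simple_graph (n : nat) (adj : rel 'I_n) : Prop :=
  (forall u v, adj u v = adj v u) /\ (forall u, ~~ adj u u).

(* F_uv is given as a
   function R -> R; only its restriction to [-1,1] is relevant. Continuous
   differentiability is required of F on all of R (every C^1 function on [-1,1]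
   extends to a C^1 function on R). *)
Definition edge_fun_ok (R : realType) (f : R -> R) : Prop :=
  [/\ (forall x, derivable f x 1) /\ continuous (f^`()),
      (forall x, -1 <= x <= 1 -> -1 <= f x <= 1),
      f 0 = 0,
      (forall x y, -1 <= x <= 1 -> -1 <= y <= 1 -> x < y -> f x < f y)
    & (forall x, -1 <= x <= 1 -> f (- x) = - f x)].

Definition gmap (R : realType) (n : nat) (adj : rel 'I_n)
  (F : 'I_n -> 'I_n -> R -> R) (x : 'rV[R]_n) : 'rV[R]_n :=
  \row_(u < n) (x ord0 u + \sum_(v < n | adj u v)
                   x ord0 u * x ord0 v * F u v (x ord0 u - x ord0 v)).

(* Main.v *)
Require Import Defs.
From HB Require Import structures.
From mathcomp Require Import all_boot all_order all_algebra.
From mathcomp Require Import all_classical all_reals all_analysis.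
From mathcomp Require Import lra.
Import Order.TTheory GRing.Theory Num.Theory.
Import numFieldNormedType.Exports.
Local Open Scope ring_scope.
Local Open Scope classical_set_scope.
Set Implicit Arguments. Unset Strict Implicit.
Lemma swap_sum (R : realType) n (adj : rel 'I_n) (b : 'I_n -> 'I_n -> R) :
  (forall u v, adj u v = adj v u) ->
  \sum_u \sum_(v | adj u v) b u v = \sum_u \sum_(v | adj u v) b v u.
Proof.
move=> hs.
rewrite (eq_bigr (fun u => \sum_v (if adj u v then b u v else 0))); last first.
  by move=> u _; rewrite big_mkcond.
rewrite exchange_big /=; apply: eq_bigr => u _; rewrite [RHS]big_mkcond.
by apply: eq_bigr => v _; rewrite hs.
Qed.

Definition hypG (R : realType) n (adj : rel 'I_n) (F : 'I_n -> 'I_n -> R -> R) :=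
  simple_graph adj /\ (forall u v, adj u v -> F u v = F v u) /\
  (forall u v, adj u v -> edge_fun_ok (F u v)).

Lemma simplex_le1 (R : realType) n (y : 'rV[R]_n) u : in_simplex y -> y ord0 u <= 1.
Proof.
move=> [h0 h1]; rewrite -h1 (bigD1 u) //= lerDl.
by apply: sumr_ge0 => v _; apply: h0.
Qed.

Lemma gmapE (R : realType) n (adj : rel 'I_n) F (y : 'rV[R]_n) u :
  gmap adj F y ord0 u = y ord0 u + \sum_(v < n | adj u v)
     y ord0 u * y ord0 v * F u v (y ord0 u - y ord0 v).
Proof. by rewrite /gmap mxE. Qed.

Lemma antisym_a (R : realType) n (adj : rel 'I_n) F (y : 'rV[R]_n) u v :
  hypG adj F -> in_simplex y -> adj u v ->
  y ord0 v * y ord0 u * F v u (y ord0 v - y ord0 u) =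
  - (y ord0 u * y ord0 v * F u v (y ord0 u - y ord0 v)).
Proof.
move=> [[hs hirr] [hF hok]] hy huv.
have [_ _ _ _ hodd] := hok u v huv.
have hu0 := (proj1 hy) u; have hv0 := (proj1 hy) v.
have hu1 := simplex_le1 u hy; have hv1 := simplex_le1 v hy.
rewrite -hF // -opprB hodd; last by apply/andP; split; lra.
by rewrite mulrN [y ord0 v * _]mulrC.
Qed.

Lemma sign_a (R : realType) n (adj : rel 'I_n) F (y : 'rV[R]_n) (s : R -> R) u v :
  hypG adj F -> in_simplex y -> adj u v -> {homo s : a b / a <= b} ->
  0 <= (s (y ord0 u) - s (y ord0 v)) *
       (y ord0 u * y ord0 v * F u v (y ord0 u - y ord0 v)).
Proof.
move=> [[hs hirr] [hF hok]] hy huv hmono.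
have [_ _ hF0 hmon _] := hok u v huv.
have hu0 := (proj1 hy) u; have hv0 := (proj1 hy) v.
have hu1 := simplex_le1 u hy; have hv1 := simplex_le1 v hy.
have hP : 0 <= y ord0 u * y ord0 v by apply: mulr_ge0.
case: (ltgtP (y ord0 u) (y ord0 v)) => h.
- have hF' : F u v (y ord0 u - y ord0 v) < 0.
    apply: (@lt_le_trans _ _ (F u v 0)); last by rewrite hF0.
    apply: hmon; try (apply/andP; split); lra.
  have hs' : s (y ord0 u) - s (y ord0 v) <= 0.
    by rewrite subr_le0; apply: hmono; apply: ltW.
  apply: mulr_le0 => //; apply: mulr_ge0_le0 => //; exact: ltW.
- have hF' : 0 < F u v (y ord0 u - y ord0 v).
    apply: (@le_lt_trans _ _ (F u v 0)); first by rewrite hF0.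
    apply: hmon; try (apply/andP; split); lra.
  have hs' : 0 <= s (y ord0 u) - s (y ord0 v).
    by rewrite subr_ge0; apply: hmono; apply: ltW.
  apply: mulr_ge0 => //; apply: mulr_ge0 => //; exact: ltW.
- by rewrite h subrr mul0r.
Qed.

Lemma key_mono (R : realType) n (adj : rel 'I_n) F (y : 'rV[R]_n) (s : R -> R) :
  hypG adj F -> in_simplex y -> {homo s : a b / a <= b} ->
  0 <= \sum_u s (y ord0 u) * (gmap adj F y ord0 u - y ord0 u).
Proof.
move=> hG hy hmono.
set a := fun u v => y ord0 u * y ord0 v * F u v (y ord0 u - y ord0 v).
have E : \sum_u s (y ord0 u) * (gmap adj F y ord0 u - y ord0 u) =
         \sum_u \sum_(v | adj u v) s (y ord0 u) * a u v.
  apply: eq_bigr => u _; rewrite gmapE addrC addKr mulr_sumr //.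
have E2 : \sum_u \sum_(v | adj u v) s (y ord0 u) * a u v =
          \sum_u \sum_(v | adj u v) - (s (y ord0 v) * a u v).
  rewrite (swap_sum _ (proj1 (proj1 hG))); apply: eq_bigr => u _.
  apply: eq_bigr => v huv; rewrite /a (antisym_a hG hy huv) mulrN //.
have E3 : \sum_u \sum_(v | adj u v) s (y ord0 u) * a u v +
          \sum_u \sum_(v | adj u v) s (y ord0 u) * a u v =
          \sum_u \sum_(v | adj u v) (s (y ord0 u) - s (y ord0 v)) * a u v.
  rewrite {2}E2 -big_split; apply: eq_bigr => u _; rewrite -big_split.
  by apply: eq_bigr => v _; rewrite mulrBl.
have H : 0 <= \sum_u \sum_(v | adj u v) (s (y ord0 u) - s (y ord0 v)) * a u v.
  apply: sumr_ge0 => u _; apply: sumr_ge0 => v huv; rewrite /a; exact: (sign_a hG hy huv hmono).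
rewrite E; move: H; rewrite -E3; lra.
Qed.
Lemma gmap_sum (R : realType) n (adj : rel 'I_n) F (y : 'rV[R]_n) :
  hypG adj F -> in_simplex y ->
  \sum_u gmap adj F y ord0 u = 1.
Proof.
move=> hG hy.
have h1 := @key_mono _ _ _ _ y (fun _ => 1) hG hy (fun a b _ => lexx 1).
have h2 := @key_mono _ _ _ _ y (fun _ => -1) hG hy (fun a b _ => lexx (-1)).
have E : \sum_u gmap adj F y ord0 u = \sum_u y ord0 u +
         \sum_u 1 * (gmap adj F y ord0 u - y ord0 u).
  rewrite -big_split; apply: eq_bigr => u _ /=; rewrite mul1r; lra.
have E2 : \sum_u -1 * (gmap adj F y ord0 u - y ord0 u) =
          - \sum_u 1 * (gmap adj F y ord0 u - y ord0 u).
  by rewrite -sumrN; apply: eq_bigr => u _; rewrite !mulN1r mul1r.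
move: h2; rewrite E2 E (proj2 hy) /=; move: h1 => /=; lra.
Qed.

Lemma gmap_ge0 (R : realType) n (adj : rel 'I_n) F (y : 'rV[R]_n) u :
  hypG adj F -> in_simplex y -> 0 <= gmap adj F y ord0 u.
Proof.
move=> [[hs hirr] [hF hok]] hy.
have hu0 := (proj1 hy) u.
rewrite gmapE.
have E : \sum_(v < n | adj u v) y ord0 u * y ord0 v * F u v (y ord0 u - y ord0 v)
   = y ord0 u * \sum_(v < n | adj u v) y ord0 v * F u v (y ord0 u - y ord0 v).
  by rewrite mulr_sumr; apply: eq_bigr => v _; rewrite mulrA.
rewrite E.
have H1 : \sum_(v < n | adj u v) (- y ord0 v) <=
          \sum_(v < n | adj u v) y ord0 v * F u v (y ord0 u - y ord0 v).
  apply: ler_sum => v huv.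
  have [_ hb _ _ _] := hok u v huv.
  have hv0 := (proj1 hy) v.
  have hu1 := simplex_le1 u hy; have hv1 := simplex_le1 v hy.
  have /andP[hb1 hb2] : -1 <= F u v (y ord0 u - y ord0 v) <= 1.
    by apply: hb; apply/andP; split; lra.
  by rewrite -[X in X <= _]mulrN1; apply: ler_wpM2l.
have H2 : \sum_(v < n | adj u v) y ord0 v <= 1.
  rewrite -(proj2 hy) [X in _ <= X](bigID (fun v => adj u v)) /= lerDl.
  by apply: sumr_ge0 => w _; apply: (proj1 hy).
rewrite sumrN in H1.
have : 0 <= 1 + \sum_(v < n | adj u v) y ord0 v * F u v (y ord0 u - y ord0 v) by lra.
move=> H3; rewrite -[X in X + _]mulr1 -mulrDr; exact: mulr_ge0.
Qed.

Lemma gmap_simplex (R : realType) n (adj : rel 'I_n) F (y : 'rV[R]_n) :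
  hypG adj F -> in_simplex y -> in_simplex (gmap adj F y).
Proof. by move=> hG hy; split; [move=> u; exact: gmap_ge0|exact: gmap_sum]. Qed.
Lemma cvg_epsP (R : realType) (u : nat -> R) (l : R) :
  u @ \oo --> l <-> forall e, 0 < e -> exists N, forall t, (N <= t)%N -> `|l - u t| < e.
Proof.
split.
- move=> /cvgrPdist_lt H e e0; have [N _ HN] := H e e0.
  by exists N => t Nt; apply: HN.
- move=> H; apply/cvgrPdist_lt => e e0; have [N HN] := H e e0.
  by exists N => // t /= Nt; apply: HN.
Qed.

Lemma absP (R : realType) (x e : R) : `|x| < e <-> -e < x /\ x < e.
Proof. by rewrite ltr_norml; split => [/andP[]|[-> ->]]. Qed.

Lemma bounded_osc (R : realType) (f : nat -> R) : (forall t, 0 <= f t <= 1) ->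
  (exists l : R, f @ \oo --> l) \/
  (exists a b, a < b /\ (forall N, exists k, (N <= k)%N /\ f k < a) /\
                       (forall N, exists k, (N <= k)%N /\ b < f k)).
Proof.
move=> hb.
have lb : has_lbound (range f) by exists 0 => _ [t _ <-]; case/andP: (hb t).
have ub : has_ubound (range f) by exists 1 => _ [t _ <-]; case/andP: (hb t).
have cI := cvg_infs_sup ub lb; set A := sup (range (infs f)) in cI.
have cS := cvg_sups_inf ub lb; set B := inf (range (sups f)) in cS.
have ne N : sdrop f N !=set0 by exists (f N); rewrite /sdrop /=; exists N.
have hif t : infs f t <= f t.
  rewrite /infs /=; move: (ge_inf (has_lbound_sdrop lb t)) => /(_ (f t)); apply.
  by rewrite /sdrop /=; exists t.
have hsf t : f t <= sups f t.
  rewrite /sups /=; move: (ub_le_sup (has_ubound_sdrop ub t)) => /(_ (f t)); apply.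
  by rewrite /sdrop /=; exists t.
have hIA N : infs f N <= A.
  have : has_ubound (range (infs f)).
    exists 1 => _ [m _ <-]; apply: le_trans (hif m) _; by case/andP: (hb m).
  by move=> /ub_le_sup /(_ (infs f N)); apply; exists N.
have hBS N : B <= sups f N.
  have : has_lbound (range (sups f)).
    exists 0 => _ [m _ <-]; apply: le_trans (hsf m); by case/andP: (hb m).
  by move=> /ge_inf /(_ (sups f N)); apply; exists N.
case: (ltP A B) => hAB.
- right; exists (A + (B - A) / 3), (B - (B - A) / 3); split; first lra.
  split => N.
  + have : infs f N < A + (B - A) / 3 by have := hIA N; lra.
    move=> /(inf_lt (ne N)) [y [k /= Nk <-] hk]; by exists k.
  + have : B - (B - A) / 3 < sups f N by have := hBS N; lra.
    move=> /(sup_gt (ne N)) [y [k /= Nk <-] hk]; by exists k.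
- left; exists A; apply/cvg_epsP => e e0.
  have [N1 H1] := (cvg_epsP _ _).1 cI e e0.
  have [N2 H2] := (cvg_epsP _ _).1 cS e e0.
  exists (maxn N1 N2) => t ht.
  have h1 := H1 t (leq_trans (leq_maxl _ _) ht).
  have h2 := H2 t (leq_trans (leq_maxr _ _) ht).
  move: h1 h2 => /absP [h1 h1'] /absP [h2 h2'].
  have := hif t; have := hsf t => ? ?.
  apply/absP; split; lra.
Qed.
Definition pp (R : realType) (c y : R) := if c < y then y - c else 0.

Definition tent (R : realType) (c d y : R) :=
  pp (c - d) y + pp (c + d) y - pp c y - pp c y.

Lemma tent_ge0 (R : realType) (c d y : R) : 0 < d -> 0 <= tent c d y <= d.
Proof.
move=> d0; rewrite /tent /pp.
case: (ltP (c - d) y); case: (ltP (c + d) y); case: (ltP c y) => *;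
  apply/andP; split; lra.
Qed.

Lemma tent_near (R : realType) (c d y : R) : 0 < d -> `|y - c| < d / 2 ->
  d / 2 <= tent c d y.
Proof.
move=> d0 /absP [h1 h2]; rewrite /tent /pp.
case: (ltP (c - d) y); case: (ltP (c + d) y); case: (ltP c y) => *; lra.
Qed.

Lemma tent_far (R : realType) (c d y : R) : 0 < d -> d <= `|y - c| ->
  tent c d y = 0.
Proof.
move=> d0 h; have h' : d <= y - c \/ y - c <= - d.
  case: (lerP 0 (y - c)) => hy.
  - by left; move: h; rewrite ger0_norm.
  - by right; move: h; rewrite ltr0_norm // => ?; lra.
rewrite /tent /pp.
case: (ltP (c - d) y); case: (ltP (c + d) y); case: (ltP c y) => *; lra.
Qed.

Lemma nat_sep (R : realType) (i j : nat) : i <> j -> 1 <= `|(i%:R : R) - j%:R|.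
Proof.
move=> hij; case: (ltngtP i j) => h.
- have : (i.+1%:R : R) <= j%:R by rewrite ler_nat.
  rewrite -addn1 natrD => ?; rewrite ltr0_norm; lra.
- have : (j.+1%:R : R) <= i%:R by rewrite ler_nat.
  rewrite -addn1 natrD => ?; rewrite ger0_norm; lra.
- by [].
Qed.

Lemma tent_sum (R : realType) m (a d y : R) : 0 < d ->
  \sum_(i < m) tent (a + d + 2 * d * (i : nat)%:R) d y <= d.
Proof.
move=> d0.
case: (pselect (exists i : 'I_m, `|y - (a + d + 2 * d * (i : nat)%:R)| < d)).
- move=> [i0 hi0]; rewrite (bigD1 i0) //= big1 ?addr0.
    by case/andP: (tent_ge0 (a + d + 2 * d * (i0 : nat)%:R) y d0).
  move=> j hj; apply: tent_far => //.
  have hs : 1 <= `|((j : nat)%:R : R) - (i0 : nat)%:R|.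
    by apply: nat_sep => /val_inj h; move: hj; rewrite h eqxx.
  have E : (a + d + 2 * d * (j : nat)%:R) - (a + d + 2 * d * (i0 : nat)%:R)
      = 2 * d * ((j : nat)%:R - (i0 : nat)%:R) by rewrite mulrBr; lra.
  have h2 : 2 * d <= `|(a + d + 2 * d * (j : nat)%:R) - (a + d + 2 * d * (i0 : nat)%:R)|.
    rewrite E normrM (@ger0_norm _ (2 * d)); last lra.
    by rewrite -[X in X <= _]mulr1 ler_wpM2l //; lra.
  set cj := a + d + 2 * d * (j : nat)%:R in h2 *.
  set ci := a + d + 2 * d * (i0 : nat)%:R in h2 hi0 *.
  have tri : `|cj - ci| <= `|y - cj| + `|y - ci|.
    have -> : cj - ci = (cj - y) + (y - ci) by lra.
    by apply: le_trans (ler_normD _ _) _; rewrite (distrC cj).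
  lra.
- move=> hn; rewrite big1 //; first lra.
  move=> i _; apply: tent_far => //; rewrite leNgt; apply/negP => hi.
  by apply: hn; exists i.
Qed.
Lemma crossing (R : realType) (f : nat -> R) (c : R) s t :
  (s <= t)%N -> f s < c -> c <= f t ->
  exists k, (s <= k)%N /\ (k < t)%N /\ f k < c /\ c <= f k.+1.
Proof.
elim: t => [|t IH] hst hs ht.
- by move: hst; rewrite leqn0 => /eqP E; move: hs; rewrite E; lra.
- case: (ltP (f t) c) => hft.
  + case: (leqP s t) => hst'.
    * by exists t; split => //.
    * have E : s = t.+1 by apply/eqP; rewrite eqn_leq hst.
      by move: hs ht; rewrite E; lra.
  + case: (leqP s t) => hst'.
    * have [k [h1 [h2 h3]]] := IH hst' hs hft.
      by exists k; split => //; split => //; apply: ltnW.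
    * have E : s = t.+1 by apply/eqP; rewrite eqn_leq hst.
      by move: hs ht; rewrite E; lra.
Qed.

Lemma near_io (R : realType) (f : nat -> R) (a b c eta : R) :
  (forall N, exists k, (N <= k)%N /\ f k < a) ->
  (forall N, exists k, (N <= k)%N /\ b < f k) ->
  a < c -> c < b ->
  (exists N0, forall t, (N0 <= t)%N -> `|f t.+1 - f t| < eta) ->
  forall N, exists k, (N <= k)%N /\ `|f k - c| < eta.
Proof.
move=> ha hb hac hcb [N0 hN0] N.
have [s [hs1 hs2]] := ha (maxn N N0).
have [t [ht1 ht2]] := hb s.
have [k [k1 [k2 [k3 k4]]]] := crossing (f := f) ht1 (lt_trans hs2 hac) (ltW (lt_trans hcb ht2)).
have hk : (maxn N N0 <= k)%N by apply: leq_trans k1.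
exists k.+1; split.
  by apply: leq_trans (leq_maxl N N0) _; apply: (leq_trans hk).
have := hN0 k (leq_trans (leq_maxr N N0) hk) => /absP [h1 h2].
by apply/absP; split; lra.
Qed.

Lemma io_ge (R : realType) (u : nat -> R) (l c : R) : u @ \oo --> l ->
  (forall N, exists k, (N <= k)%N /\ c <= u k) -> c <= l.
Proof.
move=> /cvg_epsP hu hio; rewrite leNgt; apply/negP => hlc.
have [N hN] := hu (c - l) ltac:(lra).
have [k [hk1 hk2]] := hio N.
by have := hN k hk1 => /absP [h1 h2]; lra.
Qed.

Lemma le_lim (R : realType) (u : nat -> R) (l M : R) : u @ \oo --> l ->
  (forall t, u t <= M) -> l <= M.
Proof.
move=> /cvg_epsP hu hM; rewrite leNgt; apply/negP => hlc.
have [N hN] := hu (l - M) ltac:(lra).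
by have := hN N (leqnn N) => /absP [h1 h2]; have := hM N; lra.
Qed.

Lemma ge_lim (R : realType) (u : nat -> R) (l M : R) : u @ \oo --> l ->
  (forall t, M <= u t) -> M <= l.
Proof.
move=> /cvg_epsP hu hM; rewrite leNgt; apply/negP => hlc.
have [N hN] := hu (M - l) ltac:(lra).
by have := hN N (leqnn N) => /absP [h1 h2]; have := hM N; lra.
Qed.

Lemma lim_uniq (R : realType) (u : nat -> R) (a b : R) : u @ \oo --> a ->
  u @ \oo --> b -> a = b.
Proof.
move=> /cvg_epsP ha /cvg_epsP hb; apply/eqP; rewrite eq_le; apply/andP; split;
  rewrite leNgt; apply/negP => h.
- have [N1 h1] := ha ((a - b) / 2) ltac:(lra).
  have [N2 h2] := hb ((a - b) / 2) ltac:(lra).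
  have := h1 (maxn N1 N2) (leq_maxl _ _); have := h2 (maxn N1 N2) (leq_maxr _ _).
  by move=> /absP [? ?] /absP [? ?]; lra.
- have [N1 h1] := ha ((b - a) / 2) ltac:(lra).
  have [N2 h2] := hb ((b - a) / 2) ltac:(lra).
  have := h1 (maxn N1 N2) (leq_maxl _ _); have := h2 (maxn N1 N2) (leq_maxr _ _).
  by move=> /absP [? ?] /absP [? ?]; lra.
Qed.

Lemma cvg_sum_ord (R : realType) m (u : 'I_m -> nat -> R) (l : 'I_m -> R) :
  (forall i, u i @ \oo --> l i) ->
  (fun t => \sum_(i < m) u i t) @ \oo --> \sum_(i < m) l i.
Proof.
elim: m u l => [|m IH] u l hu.
- have -> : (fun t => \sum_(i < 0) u i t) = (fun=> 0) by apply/funext => t; rewrite big_ord0.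
  rewrite big_ord0; exact: cvg_cst.
- have -> : (fun t => \sum_(i < m.+1) u i t) =
     (fun t => \sum_(i < m) u (widen_ord (leqnSn m) i) t + u ord_max t).
    by apply/funext => t; rewrite big_ord_recr.
  rewrite big_ord_recr; apply: cvgD; last exact: hu.
  by apply: IH => i; apply: hu.
Qed.
Lemma term_le_sum (R : realType) n (f : 'I_n -> R) u :
  (forall w, 0 <= f w) -> f u <= \sum_w f w.
Proof.
move=> h; rewrite (bigD1 u) //= lerDl; by apply: sumr_ge0 => w _.
Qed.

Lemma coord_cvg (R : realType) n (x : nat -> 'I_n -> R) (u : 'I_n) :
  (forall t w, 0 <= x t w <= 1) ->
  (forall c, exists L : R, (fun t => \sum_w pp c (x t w)) @ \oo --> L) ->
  (forall eta, 0 < eta -> exists N, forall t, (N <= t)%N -> `|x t.+1 u - x t u| < eta) ->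
  exists l : R, (fun t => x t u) @ \oo --> l.
Proof.
move=> hb hL hstep.
case: (@bounded_osc R (fun t => x t u)) => [t|//|[a [b [hab [ha hb']]]]].
  exact: hb.
pose m := (2 * n + 1)%N.
have m0 : (0 : R) < m%:R by rewrite ltr0n /m addn1.
pose d := (b - a) / (2 * m%:R).
have hd : 2 * m%:R * d = b - a.
  rewrite /d mulrCA mulfV ?mulr1 // gt_eqF //; lra.
have d0 : 0 < d by nra.
pose c (i : nat) := a + d + 2 * d * i%:R.
have hc i : (i < m)%N -> a < c i < b.
  move=> him; have : (i.+1%:R : R) <= m%:R by rewrite ler_nat.
  rewrite -natr1 /c => hi; have i0 : (0 : R) <= i%:R by apply: ler0n.
  apply/andP; split; nra.
have hst := hstep (d / 2) ltac:(lra).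
have hio i : (i < m)%N -> forall N, exists k, (N <= k)%N /\ `|x k u - c i| < d / 2.
  move=> him; case/andP: (hc i him) => h1 h2.
  exact: (@near_io R (fun t => x t u) a b (c i) (d / 2) ha hb' h1 h2 hst).
pose T (i : nat) t := \sum_w tent (c i) d (x t w).
have cT i : exists L : R, T i @ \oo --> L.
  have [L1 h1] := hL (c i - d); have [L2 h2] := hL (c i + d); have [L3 h3] := hL (c i).
  exists (L1 + L2 - L3 - L3).
  have -> : T i = (fun t => \sum_w pp (c i - d) (x t w) + \sum_w pp (c i + d) (x t w)
     - \sum_w pp (c i) (x t w) - \sum_w pp (c i) (x t w)).
    by apply/funext => t; rewrite /T /tent !sumrB big_split.
  apply: cvgB; last exact: h3.
  apply: cvgB; last exact: h3.
  by apply: cvgD.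
pose H (i : nat) := lim (T i @ \oo).
have cTi i : T i @ \oo --> H i by apply/cvg_ex; apply: cT.
have hH i : (i < m)%N -> d / 2 <= H i.
  move=> him; apply: (io_ge (cTi i)) => N.
  have [k [hk1 hk2]] := hio i him N.
  exists k; split => //; apply: le_trans (@tent_near R (c i) d (x k u) d0 hk2) _.
  apply: (@term_le_sum R n (fun w => tent (c i) d (x k w))) => w.
  by case/andP: (@tent_ge0 R (c i) d (x k w) d0).
have hS := @cvg_sum_ord R m (fun i => T i) (fun i => H i) (fun i => cTi i).
have hB t : \sum_(i < m) T i t <= n%:R * d.
  rewrite /T exchange_big /=.
  apply: (@le_trans _ _ (\sum_(w < n) d)).
    apply: ler_sum => w _; exact: tent_sum.
  by rewrite sumr_const card_ord mulr_natl.
have h1 := le_lim hS hB.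
have h2 : \sum_(i < m) (d / 2) <= \sum_(i < m) H i.
  by apply: ler_sum => i _; apply: hH.
exfalso; move: h2; rewrite sumr_const card_ord -[_ *+ m]mulr_natl /m natrD natrM /=.
have n0 : (0 : R) <= n%:R by apply: ler0n.
nra.
Qed.
Lemma mono_cvg (R : realType) (u : nat -> R) (M : R) :
  (forall t, u t <= u t.+1) -> (forall t, u t <= M) -> exists l : R, u @ \oo --> l.
Proof.
move=> hi hM; exists (sup (range u)); apply: nondecreasing_cvgn.
  by apply/nondecreasing_seqP.
by exists M => _ [t _ <-].
Qed.

Lemma traj_simplex (R : realType) n (adj : rel 'I_n) F (x0 : 'rV[R]_n) :
  hypG adj F -> in_simplex x0 -> forall t, in_simplex (iter t (gmap adj F) x0).
Proof.
move=> hG hx; elim => [//|t IH]; rewrite iterS; exact: gmap_simplex.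
Qed.

Lemma pp_step (R : realType) n (adj : rel 'I_n) F (y : 'rV[R]_n) c :
  hypG adj F -> in_simplex y ->
  \sum_w pp c (y ord0 w) <= \sum_w pp c (gmap adj F y ord0 w).
Proof.
move=> hG hy.
have hs : {homo (fun z : R => if c < z then (1 : R) else 0) : a b / (a <= b)%R}.
  by move=> a b hab /=; case: (ltP c a); case: (ltP c b) => *; lra.
have := @key_mono _ _ _ _ y _ hG hy hs.
move=> h; rewrite -subr_ge0 -sumrB; apply: le_trans h _.
apply: ler_sum => w _; rewrite /pp.
by case: (ltP c (y ord0 w)); case: (ltP c (gmap adj F y ord0 w)) => *; lra.
Qed.

Lemma sq_step (R : realType) n (adj : rel 'I_n) F (y : 'rV[R]_n) :
  hypG adj F -> in_simplex y ->
  \sum_w (gmap adj F y ord0 w - y ord0 w) * (gmap adj F y ord0 w - y ord0 w) <=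
  \sum_w gmap adj F y ord0 w * gmap adj F y ord0 w - \sum_w y ord0 w * y ord0 w.
Proof.
move=> hG hy.
have hs : {homo (fun z : R => 2 * z) : a b / (a <= b)%R}.
  by move=> a b hab /=; lra.
have := @key_mono _ _ _ _ y _ hG hy hs.
move=> h; rewrite -subr_ge0 -!sumrB; apply: le_trans h _.
by apply: ler_sum => w _; rewrite /=; nra.
Qed.
Unset Implicit Arguments.

Theorem mainTheorem4 (R : realType) (n : nat) (adj : rel 'I_n)
  (F : 'I_n -> 'I_n -> R -> R) :
  simple_graph adj ->
  (forall u v, adj u v -> F u v = F v u) ->
  (forall u v, adj u v -> edge_fun_ok (F u v)) ->
  forall x0 : 'rV[R]_n, in_simplex x0 ->
  exists p : 'rV[R]_n,
    (fun t : nat => iter t (gmap adj F) x0) @ \oo --> p /\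
    in_simplex p /\ gmap adj F p = p.
Proof.
move=> hsg hsym hok x0 hx0.
have hG : hypG adj F by split => //; split.
pose X t := iter t (gmap adj F) x0.
have hX t : in_simplex (X t) by apply: traj_simplex.
pose x t w := X t ord0 w.
have hXS t : X t.+1 = gmap adj F (X t) by rewrite /X iterS.
have hb t w : 0 <= x t w <= 1.
  by apply/andP; split; [apply: (proj1 (hX t)) | apply: simplex_le1].
have hL c : exists L : R, (fun t => \sum_w pp c (x t w)) @ \oo --> L.
  apply: (@mono_cvg R _ ((1 + `|c|) *+ n)).
    by move=> t; rewrite /x hXS; apply: pp_step.
  move=> t; apply: (@le_trans _ _ (\sum_(w < n) (1 + `|c|)));
    last by rewrite sumr_const card_ord.
  apply: ler_sum => w _; rewrite /pp.
  case/andP: (hb t w) => h1 h2.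
  have := ler_norm (- c); rewrite normrN; have := normr_ge0 c.
  by case: (ltP c (x t w)) => *; lra.
have hstep u eta : 0 < eta -> exists N, forall t, (N <= t)%N -> `|x t.+1 u - x t u| < eta.
  move=> eta0.
  have [lQ hQ] : exists lQ : R, (fun t => \sum_w x t w * x t w) @ \oo --> lQ.
    apply: (@mono_cvg R _ (1 *+ n)).
      move=> t; rewrite /x hXS.
      have := sq_step hG (hX t).
      have : 0 <= \sum_w (gmap adj F (X t) ord0 w - X t ord0 w) *
                         (gmap adj F (X t) ord0 w - X t ord0 w).
        by apply: sumr_ge0 => w _; rewrite -expr2; exact: sqr_ge0.
      lra.
    move=> t; apply: (@le_trans _ _ (\sum_(w < n) (1 : R)));
      last by rewrite sumr_const card_ord.
    apply: ler_sum => w _; case/andP: (hb t w) => h1 h2; nra.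
  have [N hN] := (cvg_epsP _ _).1 hQ (eta * eta / 2) ltac:(nra).
  exists N => t ht.
  have h1 := hN t ht; have h2 := hN t.+1 (leqW ht).
  move: h1 h2 => /absP [h1 h1'] /absP [h2 h2'].
  have hs := sq_step hG (hX t); rewrite -hXS in hs.
  have hpos : forall w, 0 <= (X t.+1 ord0 w - X t ord0 w) * (X t.+1 ord0 w - X t ord0 w).
    by move=> w; rewrite -expr2; exact: sqr_ge0.
  have ht1 := @term_le_sum R n (fun w => (X t.+1 ord0 w - X t ord0 w) *
                 (X t.+1 ord0 w - X t ord0 w)) u hpos.
  rewrite /= in ht1.
  rewrite /x; apply/absP; split; nra.
pose l u := lim ((fun t => x t u) @ \oo).
have hl u : (fun t => x t u) @ \oo --> l u.
  apply/cvg_ex; apply: coord_cvg => //; exact: hstep.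
exists (\row_u l u); split; [|split; [split|]].
- move=> A [P hP hPA].
  have H : \forall t \near \oo, forall i j, P i j (X t i j).
    apply: filter_forall => i; apply: filter_forall => j.
    have := hP i j; rewrite mxE ord1 => hPij.
    exact: (hl j _ hPij).
  exact: (filterS (fun t ht => hPA (X t) ht) H).
- move=> u; rewrite mxE; apply: (ge_lim (hl u)) => t; by case/andP: (hb t u).
- have hs := @cvg_sum_ord R n (fun u t => x t u) l (fun u => hl u).
  have hc : (fun t => \sum_(u < n) x t u) @ \oo --> (1 : R).
    have -> : (fun t => \sum_(u < n) x t u) = (fun=> 1).
      by apply/funext => t; exact: (proj2 (hX t)).
    exact: cvg_cst.
  rewrite (eq_bigr (fun u => l u)); last by move=> u _; rewrite mxE.
  exact: lim_uniq hs hc.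
- apply/rowP => u; rewrite gmapE !mxE.
  have hD : (fun t => x t.+1 u - x t u) @ \oo --> (0 : R).
    apply/cvg_epsP => e e0.
    have [N hN] := (cvg_epsP _ _).1 (hl u) (e / 2) ltac:(lra).
    exists N => t ht.
    have := hN t ht; have := hN t.+1 (leqW ht).
    move=> /absP [h1 h1'] /absP [h2 h2']; apply/absP; split; lra.
  have hE : (fun t => x t.+1 u - x t u) = (fun t => \sum_(v < n)
      (if adj u v then x t u * x t v * F u v (x t u - x t v) else 0)).
    by apply/funext => t; rewrite /x hXS gmapE -big_mkcond addrC addKr.
  have hC : (fun t => \sum_(v < n)
      (if adj u v then x t u * x t v * F u v (x t u - x t v) else 0)) @ \oo -->
      \sum_(v < n) (if adj u v then l u * l v * F u v (l u - l v) else 0).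
    apply: (@cvg_sum_ord R n (fun v t =>
      (if adj u v then x t u * x t v * F u v (x t u - x t v) else 0))) => v.
    case huv: (adj u v); last exact: cvg_cst.
    have [[hder _] _ _ _ _] := hok u v huv.
    have hFc : {for (l u - l v), continuous (F u v)}.
      by apply: differentiable_continuous; apply/derivable1_diffP.
    apply: cvgM; first by apply: cvgM; apply: hl.
    by apply: continuous_cvg hFc _; apply: cvgB; apply: hl.
  rewrite hE in hD.
  rewrite big_mkcond /=.
  rewrite (eq_bigr (fun i => if adj u i then l u * l i * F u i (l u - l i) else 0));
    last by move=> i _; rewrite !mxE.
  by rewrite (lim_uniq hC hD) addr0.
Qed.
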